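(* The stabilizer of $(1,0,0,0)$ in the group $\langle H^\infty,\iota\rangle$ is $\langle H^\infty[3],\iota\rangle$, where $H^\infty[3]$ acts on $\mathbb{R}^4$ fixing the first coordinate.
   Context: Let $\tau=(1+\sqrt5)/2$, $\tau'=(1-\sqrt5)/2$. Let $\Delta\subset\mathbb{R}^4$ be the set of 120 vectors consisting of: the 8 vectors obtained from $(\pm1,0,0,0)$ by permuting coordinates; the 16 vectors $\frac12(\pm1,\pm1,\pm1,\pm1)$; and the 96 vectors obtained from $\frac12(0,\pm1,\pm\tau',\pm\tau)$ (all sign choices) by even permutations of the coordinates; $\Delta'$ is its image under $\tau\leftrightarrow\tau'$ in each coordinate. For a unit vector $a$, $r_a(x)=x-2(x\cdot a)a$; $H^\infty$ is the group generated by $r_a$, $a\in\Delta\cup\Delta'$. Let $V=\{x\in\mathbb{R}^4:x_1=0\}$, $\Delta[3]=\Delta\cap V$, $\Delta[3]'=\Delta'\cap V$, and $H^\infty[3]$ the group generated by $r_a$, $a\in\Delta[3]\cup\Delta[3]'$. Let $\iota$ be the linear map $(x_1,x_2,x_3,x_4)\mapsto(x_1,x_2,x_4,x_3)$. *)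

(* Defs.v *)
(* Vectors of R^4 are row vectors 'rV[R]_4; linear maps act
   on the right: x |-> x *m M. *)
From HB Require Import structures.
From mathcomp Require Import all_boot all_order all_algebra all_fingroup.
Set Implicit Arguments. Unset Strict Implicit. Unset Printing Implicit Defensive.
Import Order.TTheory GRing.Theory Num.Theory.
Local Open Scope ring_scope.

Section H4.
Variable R : rcfType.

Definition tau : R := (1 + Num.sqrt 5) / 2.
Definition tau' : R := (1 - Num.sqrt 5) / 2.

Definition sgnb (b : bool) : R := if b then -1 else 1.

Definition base_vec (t t' : R) (b1 b2 b3 : bool) : 'rV[R]_4 :=
  \row_(j < 4) (match val j with
               | 0 => 0
               | 1 => sgnb b1
               | 2 => sgnb b2 * t'
               | _ => sgnb b3 * t
               end / 2).

Definition Delta_gen (t t' : R) (a : 'rV[R]_4) : Prop :=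
  (exists (i : 'I_4) (b : bool), a = sgnb b *: delta_mx 0 i)
  \/ (exists f : 'I_4 -> bool, a = \row_i (sgnb (f i) / 2))
  \/ (exists (s : 'S_4) (b1 b2 b3 : bool),
        ~~ odd_perm s /\ a = \row_i (base_vec t t' b1 b2 b3 0 (s i))).

Definition Delta (a : 'rV[R]_4) : Prop := Delta_gen tau tau' a.
Definition Delta' (a : 'rV[R]_4) : Prop := Delta_gen tau' tau a.

Definition inV (a : 'rV[R]_4) : Prop := a 0 0 = 0.

Definition refl (a : 'rV[R]_4) : 'M[R]_4 := 1%:M - 2 *: (a^T *m a).

Definition iota_mx : 'M[R]_4 := perm_mx (tperm (inord 2 : 'I_4) (inord 3)).

Inductive gen (S : 'M[R]_4 -> Prop) : 'M[R]_4 -> Prop :=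
  | gen_one : gen S 1%:M
  | gen_gen g : S g -> gen S g
  | gen_mul g h : gen S g -> gen S h -> gen S (g *m h)
  | gen_inv g : gen S g -> gen S (invmx g).

Definition gens_Hinf_iota (g : 'M[R]_4) : Prop :=
  (exists a, (Delta a \/ Delta' a) /\ g = refl a) \/ g = iota_mx.

Definition gens_H3_iota (g : 'M[R]_4) : Prop :=
  (exists a, ((Delta a /\ inV a) \/ (Delta' a /\ inV a)) /\ g = refl a)
  \/ g = iota_mx.

Definition e1 : 'rV[R]_4 := delta_mx 0 0.

End H4.

(* Main.v *)
Require Import Defs.
From HB Require Import structures.
From mathcomp Require Import all_boot all_order all_algebra all_fingroup.
From mathcomp Require Import ring lra zify.
Set Implicit Arguments. Unset Strict Implicit. Unset Printing Implicit Defensive.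
Import Order.TTheory GRing.Theory Num.Theory.
Local Open Scope ring_scope.

Section Tau.
Variable R : rcfType.

Lemma sqrt5E : Num.sqrt (5 : R) ^+ 2 = 5.
Proof. by rewrite sqr_sqrtr // ler0n. Qed.

Lemma tau2 : tau R ^+ 2 = tau R + 1.
Proof.
rewrite /tau; set s := Num.sqrt 5.
have h : s ^+ 2 = 5 by exact: sqrt5E.
apply/eqP; rewrite -subr_eq0.
have -> : ((1 + s) / 2) ^+ 2 - ((1 + s) / 2 + 1) = (s ^+ 2 - 5) / 4 by field.
by rewrite h subrr mul0r.
Qed.

Lemma tau'E : tau' R = 1 - tau R.
Proof. by rewrite /tau' /tau; field. Qed.

Definition zt (x : int * int) : R := x.1%:~R + x.2%:~R * tau R.

Lemma sq5 (b c : int) : c ^+ 2 = 5 * b ^+ 2 -> b = 0.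
Proof.
move=> h; apply/eqP; apply: contraT => hb.
have hc : c != 0.
  apply: contraNneq hb => c0; move: h; rewrite c0 expr0n /= => /esym/eqP.
  by rewrite mulf_eq0 /= expf_eq0.
have hn : (`|c| ^ 2 = 5 * `|b| ^ 2)%N.
  by rewrite -abszX h abszM abszX.
have cp : (0 < `|c|)%N by rewrite absz_gt0.
have bp : (0 < `|b|)%N by rewrite absz_gt0.
have := congr1 (logn 5) hn.
rewrite lognM // ?expn_gt0 ?bp // !lognX (pfactorK 1) //.
lia.
Qed.

Lemma zt0 (x : int * int) : zt x = 0 -> x = (0, 0).
Proof.
case: x => a b; rewrite /zt /tau /= => h.
set s := Num.sqrt (5 : R) in h.
have hs : s ^+ 2 = 5 by exact: sqrt5E.
have h1 : (2 * a + b)%:~R = - (b%:~R * s) :> R.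
  rewrite intrD intrM /=; apply: (@mulIf _ (2^-1)); first by rewrite invr_eq0 pnatr_eq0.
  by rewrite -[RHS]addr0 -h; field.
have h2 : ((2 * a + b) ^+ 2)%:~R = (5 * b ^+ 2)%:~R :> R.
  by rewrite !expr2 !intrM -!expr2 h1 sqrrN exprMn hs mulrC.
have := intr_inj h2 => /sq5 b0; subst b.
move: h; rewrite mul0r addr0 => /eqP; rewrite intr_eq0 => /eqP ->//.
Qed.

Lemma zt_inj x y : zt x = zt y -> x = y.
Proof.
case: x y => a b [c d]; rewrite /zt /= => h.
have e : zt (a - c, b - d) = (a%:~R + b%:~R * tau R) - (c%:~R + d%:~R * tau R).
  by rewrite /zt /= !intrD !intrN; ring.
move: e; rewrite h subrr.
by move/zt0 => [] /eqP; rewrite subr_eq0 => /eqP -> /eqP; rewrite subr_eq0 => /eqP ->.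
Qed.
End Tau.

Section ZOps.
Variable T : pzRingType.
Definition zmul (x y : T * T) : T * T :=
  (x.1 * y.1 + x.2 * y.2, x.1 * y.2 + x.2 * y.1 + x.2 * y.2).
Definition zadd (x y : T * T) : T * T := (x.1 + y.1, x.2 + y.2).
Definition zsc (c : T) (x : T * T) : T * T := (c * x.1, c * x.2).
Definition Z3 := ((T * T) * (T * T) * (T * T))%type.
Definition dot3 (u w : Z3) : T * T :=
  zadd (zadd (zmul u.1.1 w.1.1) (zmul u.1.2 w.1.2)) (zmul u.2 w.2).
Definition refl3 (b u : Z3) : Z3 :=
  let d := dot3 u b in
  (zadd (zsc 2 u.1.1) (zsc (-1) (zmul d b.1.1)),
   zadd (zsc 2 u.1.2) (zsc (-1) (zmul d b.1.2)),
   zadd (zsc 2 u.2) (zsc (-1) (zmul d b.2))).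
Definition sc3 (c : T) (u : Z3) : Z3 := (zsc c u.1.1, zsc c u.1.2, zsc c u.2).
End ZOps.

Section Vec.
Variable R : rcfType.
Local Notation zt := (@zt R).

Lemma ztD x y : zt (zadd x y) = zt x + zt y.
Proof. by rewrite /zt /= !intrD; ring. Qed.
Lemma ztS c x : zt (zsc c x) = c%:~R * zt x.
Proof. by rewrite /zt /= !intrM; ring. Qed.
Lemma ztM x y : zt (zmul x y) = zt x * zt y.
Proof.
rewrite /zt /= !intrD !intrM.
have h := tau2 R; rewrite expr2 in h.
rewrite [RHS](_ : _ = x.1%:~R * y.1%:~R + x.2%:~R * y.2%:~R * (tau R * tau R)
  + (x.1%:~R * y.2%:~R + x.2%:~R * y.1%:~R) * tau R); last by ring.
by rewrite h; ring.
Qed.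

Definition vecZ (k : nat) (u : Z3 int) : 'rV[R]_4 :=
  \row_(j < 4) (nth 0 [:: 0; zt u.1.1; zt u.1.2; zt u.2] j / 2 ^+ k).

Lemma reflE (v a : 'rV[R]_4) : v *m refl a = v - (2 * (v *m a^T) 0 0) *: a.
Proof.
rewrite /refl mulmxBr mulmx1 -scalemxAr mulmxA [v *m a^T]mx11_scalar.
by rewrite mul_scalar_mx scalerA [in RHS]mxE eqxx mulr1n.
Qed.

Lemma sum4 (F : 'I_4 -> R) : \sum_(j < 4) F j = F 0 + F 1 + F (inord 2) + F (inord 3).
Proof.
rewrite !big_ord_recl big_ord0 addr0 !addrA.
have e2 : lift ord0 (lift ord0 (ord0 : 'I_2)) = inord 2 :> 'I_4 by apply/val_inj; rewrite /= inordK.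
have e3 : lift ord0 (lift ord0 (lift ord0 (ord0 : 'I_1))) = inord 3 :> 'I_4 by apply/val_inj; rewrite /= inordK.
rewrite e2 e3; congr (_ + _ + _ + _); congr F; exact/val_inj.
Qed.

Lemma dotE (v w : 'rV[R]_4) : (v *m w^T) 0 0 = \sum_(j < 4) v 0 j * w 0 j.
Proof. by rewrite mxE; apply: eq_bigr => j _; rewrite mxE. Qed.

Lemma refl_vecZ k u b : vecZ k u *m refl (vecZ 1 b) = vecZ k.+1 (refl3 b u).
Proof.
rewrite reflE dotE sum4 /vecZ !mxE /= !inordK //.
apply/rowP => j; rewrite !mxE.
have h2 : (2 : R) != 0 by rewrite pnatr_eq0.
have hk : (2 : R) ^+ k != 0 by rewrite expf_neq0.
have m1 : (-1)%:~R = -1 :> R by rewrite mulrN1z.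
have i2 : (2%:~R = 2 :> R) by [].
case: j => [[|[|[|[|j]]]] hj] //=; rewrite ?mul0r ?subr0 ?mulr0 //= ?mxE ?inordK //=;
 rewrite ?ztD ?ztS ?ztM ?ztD ?ztM /= ?exprS ?m1 ?i2; by field.
Qed.
End Vec.

Definition sgi (b : bool) : int := if b then -1 else 1.
Definition rootD (b1 b2 b3 : bool) : Z3 int :=
  ((sgi b1, 0), (sgi b2, - sgi b2), (0, sgi b3)).
Definition rootD' (b1 b2 b3 : bool) : Z3 int :=
  ((sgi b1, 0), (0, sgi b2), (sgi b3, - sgi b3)).
Definition bools3 : seq (bool * bool * bool) :=
  [:: (false, false, false); (false, false, true); (false, true, false); (false, true, true);
      (true, false, false); (true, false, true); (true, true, false); (true, true, true)].
Definition rootsL : seq (Z3 int) :=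
  [seq rootD t.1.1 t.1.2 t.2 | t <- bools3] ++ [seq rootD' t.1.1 t.1.2 t.2 | t <- bools3].

Definition m4 (z : int) : 'Z_4 := z%:~R.
Definition mapz (x : int * int) : 'Z_4 * 'Z_4 := (m4 x.1, m4 x.2).
Definition map3 (u : Z3 int) : Z3 'Z_4 := (mapz u.1.1, mapz u.1.2, mapz u.2).

Definition alleven (u : Z3 'Z_4) : bool :=
  all (fun x : 'Z_4 * 'Z_4 => (2 * x.1 == 0) && (2 * x.2 == 0)) [:: u.1.1; u.1.2; u.2].
Definition check (u : Z3 'Z_4) : bool :=
  [|| dot3 u u != (0, 0), alleven u |
      has (fun b => refl3 (map3 b) u == ((0, 0), (0, 0), (0, 0))) rootsL].
Definition check2 (u : Z3 'Z_4) : bool :=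
  [|| u.1.1 != (0, 0), dot3 u u != (0, 0) | alleven u].

Definition l4 : seq 'Z_4 := [:: 0; 1; 2; 3].
Definition rootsZ := Eval vm_compute in map map3 rootsL.
Definition check' (u : Z3 'Z_4) : bool :=
  [|| dot3 u u != (0, 0), alleven u |
      has (fun b => refl3 b u == ((0, 0), (0, 0), (0, 0))) rootsZ].
Definition bigcheck : bool :=
  all (fun a1 => all (fun b1 => all (fun a2 => all (fun b2 => all (fun a3 => all (fun b3 =>
    let u := ((a1, b1), (a2, b2), (a3, b3)) in check' u && check2 u) l4) l4) l4) l4) l4) l4.
Lemma bigcheckT : bigcheck.
Proof. vm_compute. reflexivity. Qed.

Lemma l4_all (z : 'Z_4) : z \in l4.
Proof. by case: z => [[|[|[|[|i]]]] hi]. Qed.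

Lemma check_all (u : Z3 'Z_4) : check' u && check2 u.
Proof.
have := bigcheckT; rewrite /bigcheck.
case: u => [[[a1 b1] [a2 b2]] [a3 b3]].
move=> /allP /(_ a1 (l4_all _)) /allP /(_ b1 (l4_all _)) /allP /(_ a2 (l4_all _))
  /allP /(_ b2 (l4_all _)) /allP /(_ a3 (l4_all _)) /allP /(_ b3 (l4_all _)).
done.
Qed.

Lemma m4D x y : m4 (x + y) = m4 x + m4 y. Proof. exact: intrD. Qed.
Lemma m4M x y : m4 (x * y) = m4 x * m4 y. Proof. exact: intrM. Qed.
Lemma m4N x : m4 (- x) = - m4 x. Proof. exact: intrN. Qed.

Lemma mapz_mul x y : mapz (zmul x y) = zmul (mapz x) (mapz y).
Proof. by rewrite /mapz /zmul /= !m4D !m4M. Qed.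
Lemma mapz_add x y : mapz (zadd x y) = zadd (mapz x) (mapz y).
Proof. by rewrite /mapz /zadd /= !m4D. Qed.
Lemma mapz_sc c x : mapz (zsc c x) = zsc (m4 c) (mapz x).
Proof. by rewrite /mapz /zsc /= !m4M. Qed.
Lemma map3_dot u w : mapz (dot3 u w) = dot3 (map3 u) (map3 w).
Proof. by rewrite /dot3 !mapz_add !mapz_mul. Qed.
Lemma map3_refl b u : map3 (refl3 b u) = refl3 (map3 b) (map3 u).
Proof.
rewrite /refl3 /map3 /= !mapz_add !mapz_sc !mapz_mul map3_dot.
by have -> : m4 2 = 2 by []; have -> : m4 (-1) = -1 by [].
Qed.

Lemma m4_eq0 z : m4 z = 0 -> exists q, z = 4 * q.
Proof.
move=> h; exists (z %/ 4)%Z.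
have hz := divz_eq z 4.
have r0 : (0 <= z %% 4)%Z by rewrite modz_ge0.
have r4 : (z %% 4 < 4)%Z by rewrite ltz_pmod.
have hm : m4 (z %% 4)%Z = 0.
  have k4 : forall y : 'Z_4, y * m4 4 = 0.
    by case=> [[|[|[|[|i]]]] hi] //; apply/eqP.
  by move: h; rewrite {1}hz m4D m4M k4 add0r.
suff e : (z %% 4)%Z = 0 by rewrite {1}hz e addr0 mulrC.
move: r0 r4 hm; case: (z %% 4)%Z => // n _.
by case: n => [|[|[|[|n]]]].
Qed.

Lemma m4pow n : m4 (4 ^+ n.+1) = 0.
Proof.
have k4 : forall y : 'Z_4, y * m4 4 = 0 by case=> [[|[|[|[|i]]]] hi] //; apply/eqP.
by rewrite exprSr m4M k4.
Qed.

Lemma m4_2 (a : int) : 2 * m4 a == 0 -> exists q, a = 2 * q.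
Proof.
move=> /eqP h.
have : m4 (2 * a) = 0 by rewrite m4M.
case/m4_eq0 => q hq; exists q; lia.
Qed.

Lemma rootsZE : rootsZ = map map3 rootsL.
Proof. reflexivity. Qed.

Lemma step3 (u : Z3 int) (n : nat) : dot3 u u = (4 ^+ n.+1, 0) ->
  (exists w, u = sc3 2 w) \/ (exists b w, b \in rootsL /\ refl3 b u = sc3 4 w).
Proof.
move=> h.
have /andP[c _] := check_all (map3 u).
have nc : dot3 (map3 u) (map3 u) = (0, 0).
  by rewrite -map3_dot h /mapz /= m4pow; congr pair; apply/eqP.
move: c; rewrite /check' rootsZE nc eqxx.
case/or3P => [//| |].
  case: u {h nc} => [[[a1 b1] [a2 b2]] [a3 b3]].
  rewrite /alleven /= => /and4P [/andP [/m4_2 [q1 ->] /m4_2 [q2 ->]] /andP [/m4_2 [q3 ->] /m4_2 [q4 ->]]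
      /andP [/m4_2 [q5 ->] /m4_2 [q6 ->]] _].
  by left; exists ((q1, q2), (q3, q4), (q5, q6)).
case/hasP => bz /mapP [b hb ->].
rewrite -map3_refl; case E: (refl3 b u) => [[[a1 b1] [a2 b2]] [a3 b3]].
move/eqP => [] /m4_eq0 [q1 e1] /m4_eq0 [q2 e2] /m4_eq0 [q3 e3] /m4_eq0 [q4 e4]
  /m4_eq0 [q5 e5] /m4_eq0 [q6 e6].
right; exists b, ((q1, q2), (q3, q4), (q5, q6)); split => //.
by rewrite E /sc3 /zsc /= e1 e2 e3 e4 e5 e6.
Qed.

Lemma step2 (u : Z3 int) (n : nat) : u.1.1 = (0, 0) -> dot3 u u = (4 ^+ n.+1, 0) ->
  exists w, u = sc3 2 w /\ w.1.1 = (0, 0).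
Proof.
move=> h0 h.
have /andP[_ c] := check_all (map3 u).
have nc : dot3 (map3 u) (map3 u) = (0, 0).
  by rewrite -map3_dot h /mapz /= m4pow; congr pair; apply/eqP.
have z0 : (map3 u).1.1 = (0, 0) by rewrite /map3 /= h0 /mapz /=; congr pair; apply/eqP.
move: c; rewrite /check2 nc z0 !eqxx /=.
case: u {h nc z0} h0 => [[[a1 b1] [a2 b2]] [a3 b3]] /= [-> ->].
rewrite /alleven /=.
move=> /and3P [/andP [/m4_2 [q3 ->] /m4_2 [q4 ->]]
    /andP [/m4_2 [q5 ->] /m4_2 [q6 ->]] _].
by exists ((0, 0), (q3, q4), (q5, q6)); split => //; rewrite /sc3 /zsc /= mulr0.
Qed.

Lemma sq1 (x : int) : x * x <= 1 -> x = -1 \/ x = 0 \/ x = 1.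
Proof. nia. Qed.
Lemma unit6 (u : Z3 int) : dot3 u u = (1, 0) ->
  u = ((1,0),(0,0),(0,0)) \/ u = ((-1,0),(0,0),(0,0)) \/ u = ((0,0),(1,0),(0,0)) \/
      u = ((0,0),(-1,0),(0,0)) \/ u = ((0,0),(0,0),(1,0)) \/ u = ((0,0),(0,0),(-1,0)).
Proof.
case: u => [[[a1 b1] [a2 b2]] [a3 b3]]; rewrite /dot3 /zadd /zmul /= => -[h1 h2].
have hb1 : b1 = 0 by nia.
have hb2 : b2 = 0 by nia.
have hb3 : b3 = 0 by nia.
subst b1 b2 b3.
have [?|[?|?]] : a1 = -1 \/ a1 = 0 \/ a1 = 1 by apply: sq1; nia.
 all: subst a1.
all: have [?|[?|?]] : a2 = -1 \/ a2 = 0 \/ a2 = 1 by apply: sq1; nia.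
 all: subst a2.
all: have [?|[?|?]] : a3 = -1 \/ a3 = 0 \/ a3 = 1 by apply: sq1; nia.
 all: subst a3.
all: try (exfalso; lia).
all: do ?[by left | right].
all: reflexivity.
Qed.

Section Desc.
Variable R : rcfType.
Local Notation zt := (@zt R).
Local Notation vecZ := (@vecZ R).

Lemma two_neq0 : (2 : R) != 0. Proof. by rewrite pnatr_eq0. Qed.

Lemma vecZ_sc2 k w : vecZ k.+1 (sc3 2 w) = vecZ k w.
Proof.
apply/rowP => j; rewrite !mxE.
have hk : (2 : R) ^+ k != 0 by rewrite expf_neq0 // two_neq0.
have h2 := two_neq0.
by case: j => [[|[|[|[|j]]]] hj] //=; rewrite ?mul0r // ztS exprS; field.
Qed.

Lemma vecZ_norm k u :
  vecZ k u *m (vecZ k u)^T = (zt (dot3 u u) / (2 ^+ k * 2 ^+ k))%:M.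
Proof.
rewrite [LHS]mx11_scalar dotE sum4 /vecZ !mxE /= !inordK //.
have hk : (2 : R) ^+ k != 0 by rewrite expf_neq0 // two_neq0.
by congr (_%:M); rewrite /= /dot3 !ztD !ztM; field.
Qed.

Lemma norm_dot k u : vecZ k u *m (vecZ k u)^T = 1%:M -> dot3 u u = (4 ^+ k, 0).
Proof.
rewrite vecZ_norm => /matrixP /(_ 0 0); rewrite !mxE /= !mulr1n.
have hk : (2 : R) ^+ k != 0 by rewrite expf_neq0 // two_neq0.
move=> h; apply: (@zt_inj R).
have -> : zt (4 ^+ k, 0) = 2 ^+ k * 2 ^+ k.
  rewrite /zt /= mul0r addr0 -exprMn.
  elim: k {h hk} => [|k IH]; rewrite ?expr0 // !exprS intrM IH.
  ring.
by move/(congr1 (fun y => y * (2 ^+ k * 2 ^+ k))): h; rewrite mul1r mulfVK ?mulf_neq0.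
Qed.

Lemma refl_sym (a : 'rV[R]_4) : (refl a)^T = refl a.
Proof.
by rewrite /refl linearB /= trmx1 linearZ /= trmx_mul trmxK.
Qed.

Lemma refl_orth (a : 'rV[R]_4) : a *m a^T = 1%:M -> refl a *m (refl a)^T = 1%:M.
Proof.
move=> h; rewrite refl_sym /refl; set Y := a^T *m a.
have YY : Y *m Y = Y by rewrite /Y mulmxA -(mulmxA a^T a a^T) h mulmx1.
rewrite mulmxBl mul1mx mulmxBr mulmx1 -scalemxAl -scalemxAr YY scalerA.
have -> : (2 * 2 : R) = 2 + 2 by ring.
set x := 2 *: Y; rewrite (scalerDl Y 2 2) -/x.
by rewrite opprD opprK addKr subrK.
Qed.


Lemma zt_sgz b : zt (sgi b, 0) = sgnb R b.
Proof. by case: b; rewrite /zt /sgnb /=; ring. Qed.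
Lemma zt_sgz_tau b : zt (0, sgi b) = sgnb R b * tau R.
Proof. by case: b; rewrite /zt /sgnb /=; ring. Qed.
Lemma zt_sgz_tau' b : zt (sgi b, - sgi b) = sgnb R b * tau' R.
Proof. by case: b; rewrite /zt /sgnb /= tau'E; ring. Qed.

Lemma rootD_Delta b1 b2 b3 : Delta (vecZ 1 (rootD b1 b2 b3)) /\ inV (vecZ 1 (rootD b1 b2 b3)).
Proof.
split; last by rewrite /inV mxE /= mul0r.
right; right; exists 1%g, b1, b2, b3; split; first by rewrite odd_perm1.
apply/rowP => j; rewrite !mxE perm1 expr1.
by case: j => [[|[|[|[|j]]]] hj] //=; rewrite ?zt_sgz ?zt_sgz_tau ?zt_sgz_tau'.
Qed.

Lemma rootD'_Delta b1 b2 b3 : Delta' (vecZ 1 (rootD' b1 b2 b3)) /\ inV (vecZ 1 (rootD' b1 b2 b3)).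
Proof.
split; last by rewrite /inV mxE /= mul0r.
right; right; exists 1%g, b1, b2, b3; split; first by rewrite odd_perm1.
apply/rowP => j; rewrite !mxE perm1 expr1.
by case: j => [[|[|[|[|j]]]] hj] //=; rewrite ?zt_sgz ?zt_sgz_tau ?zt_sgz_tau'.
Qed.

Definition eZ (j : nat) : Z3 int :=
  match j with 1%N => ((2,0),(0,0),(0,0)) | 2%N => ((0,0),(2,0),(0,0)) | _ => ((0,0),(0,0),(2,0)) end.

Lemma eZ_delta (j : 'I_4) : (0 < j)%N -> vecZ 1 (eZ j) = sgnb R false *: delta_mx 0 j.
Proof.
move=> hj; have h2 := two_neq0; apply/rowP => i; rewrite !mxE /sgnb mul1r eqxx /=.
case: j hj => [[|[|[|[|j]]]] hj] //= _; case: i => [[|[|[|[|i]]]] hi] //=;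
  rewrite ?mul0r //= /zt /= ?mul0r ?addr0; by field.
Qed.

Lemma gens_eZ (j : 'I_4) : (0 < j)%N -> gens_H3_iota (refl (vecZ 1 (eZ j))).
Proof.
move=> hj; left; exists (vecZ 1 (eZ j)); split => //; left; split.
  by left; exists j, false; apply: eZ_delta.
by rewrite /inV mxE /= mul0r.
Qed.

Lemma gen_root b : b \in rootsL -> gen (@gens_H3_iota R) (refl (vecZ 1 b)).
Proof.
rewrite mem_cat => /orP [] /mapP [[[b1 b2] b3] _ ->]; apply: gen_gen; left.
  by exists (vecZ 1 (rootD b1 b2 b3)); split => //; left; apply: rootD_Delta.
by exists (vecZ 1 (rootD' b1 b2 b3)); split => //; right; apply: rootD'_Delta.
Qed.

Lemma norm_of_dot b : dot3 b b = (4, 0) -> vecZ 1 b *m (vecZ 1 b)^T = 1%:M.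
Proof.
have h2 := two_neq0.
by rewrite vecZ_norm => ->; congr (_%:M); rewrite /zt /= mul0r addr0 expr1; field.
Qed.

Lemma root_norm b : b \in rootsL -> vecZ 1 b *m (vecZ 1 b)^T = 1%:M.
Proof.
move=> hb; apply: norm_of_dot; apply/eqP; move: b hb; apply/allP; by vm_compute.
Qed.

Lemma vecZ_iota k x1 x2 x3 : vecZ k (x1, x2, x3) *m iota_mx R = vecZ k (x1, x3, x2).
Proof.
rewrite /iota_mx -[tperm _ _]invgK -col_permE; apply/rowP => j; rewrite !mxE tpermV.
case: j => [[|[|[|[|j]]]] hj] //=; rewrite permE /= -!val_eqE /= ?inordK //=.
Qed.

Lemma vecZ_e2 : vecZ 0 ((1,0),(0,0),(0,0)) = delta_mx 0 1.
Proof.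
apply/rowP => j; rewrite !mxE /= expr0 divr1.
by case: j => [[|[|[|[|j]]]] hj] //=; rewrite /zt /= mul0r addr0.
Qed.

Lemma sc3_4 (w : Z3 int) : sc3 4 w = sc3 2 (sc3 2 w).
Proof. by case: w => [[[a b] [c d]] [e f]]; rewrite /sc3 /zsc /= !mulrA. Qed.

Definition Pm : 'M[R]_4 := refl (vecZ 1 (rootD false true false)) *m
  refl (vecZ 1 (rootD false false false)) *m refl (vecZ 1 (rootD false false true)).

Lemma Pm_gen : gen (@gens_H3_iota R) Pm.
Proof. by rewrite /Pm; apply: gen_mul; [apply: gen_mul|]; apply: gen_root. Qed.

Lemma Pm_e3 : vecZ 0 ((0,0),(1,0),(0,0)) *m Pm = delta_mx 0 1.
Proof.
rewrite /Pm !mulmxA !refl_vecZ.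
rewrite (_ : refl3 _ (refl3 _ (refl3 _ _)) = sc3 2 (sc3 2 (sc3 2 ((1,0),(0,0),(0,0))))) //.
by rewrite !vecZ_sc2 vecZ_e2.
Qed.

Lemma gen_eZ (j : 'I_4) : (0 < j)%N -> gen (@gens_H3_iota R) (refl (vecZ 1 (eZ j))).
Proof. by move=> hj; apply: gen_gen; apply: gens_eZ. Qed.

Lemma gen_eZn (j : nat) : (0 < j)%N -> (j < 4)%N -> gen (@gens_H3_iota R) (refl (vecZ 1 (eZ j))).
Proof. by move=> h0 h4; apply: (@gen_eZ (Ordinal h4)). Qed.

Lemma gen_iota : gen (@gens_H3_iota R) (iota_mx R).
Proof. by apply: gen_gen; right. Qed.

Lemma descent k : forall u, vecZ k u *m (vecZ k u)^T = 1%:M ->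
  exists s, gen (@gens_H3_iota R) s /\ vecZ k u *m s = delta_mx 0 1.
Proof.
elim: k => [|n IH] u hu.
  have := norm_dot hu; rewrite expr0 => /unit6.
  have E1 := @gen_eZn 1 erefl erefl; have E2 := @gen_eZn 2 erefl erefl.
  have E3 := @gen_eZn 3 erefl erefl.
  case=> [->|[->|[->|[->|[->|->]]]]].
  - by exists 1%:M; split; [apply: gen_one | rewrite mulmx1 vecZ_e2].
  - exists (refl (vecZ 1 (eZ 1))); split => //.
    rewrite refl_vecZ (_ : refl3 _ _ = sc3 2 ((1,0),(0,0),(0,0))) //.
    by rewrite vecZ_sc2 vecZ_e2.
  - by exists Pm; split; [apply: Pm_gen | apply: Pm_e3].
  - exists (refl (vecZ 1 (eZ 2)) *m Pm); split; first by apply: gen_mul => //; apply: Pm_gen.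
    rewrite mulmxA refl_vecZ (_ : refl3 _ _ = sc3 2 ((0,0),(1,0),(0,0))) //.
    by rewrite vecZ_sc2 Pm_e3.
  - exists (iota_mx R *m Pm); split; first by apply: gen_mul; [apply: gen_iota | apply: Pm_gen].
    by rewrite mulmxA vecZ_iota Pm_e3.
  - exists (refl (vecZ 1 (eZ 3)) *m iota_mx R *m Pm); split.
      by apply: gen_mul; [apply: gen_mul; [|apply: gen_iota] | apply: Pm_gen].
    rewrite (mulmxA (vecZ 0 _) (refl _ *m iota_mx R)) (mulmxA (vecZ 0 _) (refl _)).
    rewrite refl_vecZ (_ : refl3 _ _ = sc3 2 ((0,0),(0,0),(1,0))) //.
    by rewrite vecZ_sc2 vecZ_iota Pm_e3.
have [[w ew]|[b [w [hb hw]]]] := step3 (norm_dot hu).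
  by rewrite ew vecZ_sc2 in hu *; apply: IH.
have e : vecZ n.+1 u *m refl (vecZ 1 b) = vecZ n w.
  by rewrite refl_vecZ hw sc3_4 !vecZ_sc2.
have hw' : vecZ n w *m (vecZ n w)^T = 1%:M.
  rewrite -e trmx_mul mulmxA -(mulmxA _ (refl _)) refl_orth ?root_norm //.
  by rewrite mulmx1.
have [s [hs hs']] := IH w hw'.
exists (refl (vecZ 1 b) *m s); split; first by apply: gen_mul => //; apply: gen_root.
by rewrite mulmxA e.
Qed.

End Desc.

Section Inv.
Variable R : rcfType.
Local Notation zt := (@zt R).
Local Notation vecZ := (@vecZ R).

Definition isA (x : R) := exists k p, x = zt p / 2 ^+ k.

Lemma intr2X m : ((2 ^+ m : int)%:~R : R) = 2 ^+ m.
Proof. by elim: m => [|m IH]; rewrite ?expr0 // !exprS intrM IH. Qed.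

Lemma isA_zt k p : isA (zt p / 2 ^+ k). Proof. by exists k, p. Qed.

Lemma isAD x y : isA x -> isA y -> isA (x + y).
Proof.
move=> [k [p ->]] [m [q ->]]; exists (k + m)%N, (zadd (zsc (2 ^+ m) p) (zsc (2 ^+ k) q)).
have h2 := two_neq0 R.
have hk : (2 : R) ^+ k != 0 by rewrite expf_neq0.
have hm : (2 : R) ^+ m != 0 by rewrite expf_neq0.
by rewrite ztD !ztS !intr2X exprD; field; rewrite hk hm.
Qed.

Lemma isAM x y : isA x -> isA y -> isA (x * y).
Proof.
move=> [k [p ->]] [m [q ->]]; exists (k + m)%N, (zmul p q).
have h2 := two_neq0 R.
have hk : (2 : R) ^+ k != 0 by rewrite expf_neq0.
have hm : (2 : R) ^+ m != 0 by rewrite expf_neq0.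
by rewrite ztM exprD; field; rewrite ?hk ?hm.
Qed.

Lemma isAN x : isA x -> isA (- x).
Proof.
move=> [k [p ->]]; exists k, (zsc (-1) p); rewrite ztS.
have h2 := two_neq0 R.
have hk : (2 : R) ^+ k != 0 by rewrite expf_neq0.
by rewrite mulrN1z mulN1r mulNr.
Qed.

Lemma isA_int (z : int) : isA z%:~R.
Proof. by exists 0%N, (z, 0); rewrite /zt /= mul0r addr0 expr0 divr1. Qed.

Lemma isA_nat (n : nat) : isA n%:R.
Proof. by have := isA_int n; rewrite pmulrn. Qed.

Lemma isA_sum (F : 'I_4 -> R) : (forall i, isA (F i)) -> isA (\sum_i F i).
Proof.
move=> h; apply: (big_ind isA) => //; first by have := isA_nat 0.
by move=> x y; apply: isAD.
Qed.

Definition PA (g : 'M[R]_4) := g *m g^T = 1%:M /\ forall i j, isA (g i j).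

Lemma PA1 : PA 1%:M.
Proof. by split; [rewrite trmx1 mulmx1 | move=> i j; rewrite mxE; apply: isA_nat]. Qed.

Lemma PAM g h : PA g -> PA h -> PA (g *m h).
Proof.
move=> [og ag] [oh ah]; split.
  by rewrite trmx_mul mulmxA -(mulmxA g) oh mulmx1 og.
move=> i j; rewrite mxE; apply: isA_sum => k; exact: isAM.
Qed.

Lemma orth_inv (g : 'M[R]_4) : g *m g^T = 1%:M -> invmx g = g^T.
Proof.
move=> og; have [ug _] := mulmx1_unit og.
by rewrite -[RHS]mul1mx -(mulVmx ug) -mulmxA og mulmx1.
Qed.

Lemma PAV g : PA g -> PA (invmx g).
Proof.
move=> [og ag]; rewrite orth_inv //; split.
  by rewrite trmxK; apply: mulmx1C.
by move=> i j; rewrite mxE.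
Qed.

Lemma refl_entry (a : 'rV[R]_4) i j : refl a i j = (i == j)%:R - 2 * (a 0 i * a 0 j).
Proof. by rewrite /refl !mxE big_ord1 !mxE. Qed.

Lemma PA_refl (a : 'rV[R]_4) : a *m a^T = 1%:M -> (forall j, isA (a 0 j)) -> PA (refl a).
Proof.
move=> ha hA; split; first exact: refl_orth.
move=> i j; rewrite refl_entry; apply: isAD; first exact: isA_nat.
by apply: isAN; apply: isAM; [apply: isA_nat | apply: isAM].
Qed.

Lemma PA_iota : PA (iota_mx R).
Proof.
split; first by rewrite /iota_mx tr_perm_mx -perm_mxM mulgV perm_mx1.
by move=> i j; rewrite /iota_mx !mxE; apply: isA_nat.
Qed.

Lemma sgnb2 b : sgnb R b * sgnb R b = 1.
Proof. by case: b; rewrite /sgnb ?mulrNN mulr1. Qed.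

Lemma isA_sgnb b : isA (sgnb R b).
Proof. by case: b; rewrite /sgnb; [apply: isAN|]; apply: (isA_nat 1). Qed.

Lemma isA_tau : isA (tau R).
Proof. by exists 0%N, (0, 1); rewrite /zt /= add0r mul1r expr0 divr1. Qed.

Lemma isA_tau' : isA (tau' R).
Proof. rewrite tau'E; apply: isAD; [apply: (isA_nat 1)|apply: isAN; apply: isA_tau]. Qed.

Lemma isA_half : isA (2^-1).
Proof. by exists 1%N, (1, 0); rewrite /zt /= mul0r addr0 expr1 mul1r. Qed.

Lemma tau_sq : tau R ^+ 2 + tau' R ^+ 2 = 3.
Proof. rewrite tau'E sqrrB tau2 expr1n; ring. Qed.

Lemma norm_sum (a : 'rV[R]_4) : \sum_j a 0 j * a 0 j = 1 -> a *m a^T = 1%:M.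
Proof. by move=> h; rewrite [LHS]mx11_scalar dotE h. Qed.

Lemma four_neq0 : (4 : R) != 0. Proof. by rewrite pnatr_eq0. Qed.

Lemma Delta_gen_props t t' (a : 'rV[R]_4) :
  isA t -> isA t' -> t ^+ 2 + t' ^+ 2 = 3 -> Delta_gen t t' a ->
  a *m a^T = 1%:M /\ forall j, isA (a 0 j).
Proof.
move=> At At' h3 [[i [b ->]] | [[f ->] | [s [b1 [b2 [b3 [_ ->]]]]]]].
- split.
    apply: norm_sum; rewrite sum4 !mxE /=.
    case: i => [[|[|[|[|i]]]] hi] //=; rewrite -?val_eqE /= ?inordK //= !mulr0 ?mulr1 !addr0 ?add0r;
      by rewrite sgnb2.
  move=> j; rewrite !mxE; apply: isAM; [apply: isA_sgnb | apply: isA_nat].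
- split.
    apply: norm_sum; rewrite sum4 !mxE.
    have h2 := two_neq0 R; have h4 := four_neq0.
    have sgh : forall b, sgnb R b / 2 * (sgnb R b / 2) = (sgnb R b * sgnb R b) / 4.
      by move=> b; field.
    by rewrite !sgh !sgnb2; field.
  move=> j; rewrite !mxE; apply: isAM; [apply: isA_sgnb | apply: isA_half].
- split.
    apply: norm_sum.
    rewrite (eq_bigr (fun j => base_vec t t' b1 b2 b3 0 (s j) * base_vec t t' b1 b2 b3 0 (s j)));
      last by move=> j _; rewrite !mxE.
    pose G := fun j : 'I_4 => base_vec t t' b1 b2 b3 0 j * base_vec t t' b1 b2 b3 0 j.
    have -> : \sum_(j < 4) G (s j) = \sum_(j < 4) G j.
      by rewrite [RHS](reindex_inj (@perm_inj _ s)).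
    rewrite /G.
    rewrite sum4 !mxE /= !inordK //=.
    have h2 := two_neq0 R.
    rewrite (_ : sgnb R b1 / 2 * (sgnb R b1 / 2) = (sgnb R b1 * sgnb R b1) / 4); last by field.
    rewrite (_ : sgnb R b2 * t' / 2 * (sgnb R b2 * t' / 2) = (sgnb R b2 * sgnb R b2) * t' ^+ 2 / 4); last by field.
    rewrite (_ : sgnb R b3 * t / 2 * (sgnb R b3 * t / 2) = (sgnb R b3 * sgnb R b3) * t ^+ 2 / 4); last by field.
    rewrite !sgnb2 !mul1r.
    have -> : t ^+ 2 = 3 - t' ^+ 2 by rewrite -h3 addrK.
    by field.
  move=> j; rewrite !mxE; case: (val (s j)) => [|[|[|n]]];
    repeat first [apply: isAM | apply: isA_sgnb | apply: isA_half | exact: At | exact: At' | exact: (isA_nat 0)].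
Qed.

End Inv.

Section Main.
Variable R : rcfType.
Local Notation zt := (@zt R).
Local Notation vecZ := (@vecZ R).

Lemma PA_gens (g : 'M[R]_4) : gens_Hinf_iota g -> PA g.
Proof.
case=> [[a [ha ->]]|->]; last exact: PA_iota.
have [o e] : a *m a^T = 1%:M /\ forall j, isA (a 0 j).
  case: ha => ha; apply: (Delta_gen_props _ _ _ ha).
  - exact: isA_tau. - exact: isA_tau'. - exact: tau_sq.
  - exact: isA_tau'. - exact: isA_tau. - by rewrite addrC tau_sq.
exact: PA_refl.
Qed.

Lemma PA_gen (g : 'M[R]_4) : gen (@gens_Hinf_iota R) g -> PA g.
Proof.
elim=> [|h /PA_gens| g1 h1 _ P1 _ P2 | g1 _ P1] //; first exact: PA1.
  exact: PAM.
exact: PAV.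
Qed.

Lemma gen_mono (g : 'M[R]_4) : gen (@gens_H3_iota R) g -> gen (@gens_Hinf_iota R) g.
Proof.
elim=> [|h hh| g1 h1 _ P1 _ P2 | g1 _ P1]; first exact: gen_one.
- apply: gen_gen; case: hh => [[a [ha ->]]|->]; last by right.
  by left; exists a; split => //; case: ha => [[]|[]]; auto.
- exact: gen_mul.
- exact: gen_inv.
Qed.

Lemma e1_refl (a : 'rV[R]_4) : inV a -> e1 R *m refl a = e1 R.
Proof.
by move=> ha; rewrite reflE /e1 -rowE !mxE ha mulr0 scale0r subr0.
Qed.

Lemma e1_iota : e1 R *m iota_mx R = e1 R.
Proof.
rewrite /e1 /iota_mx -[tperm _ _]invgK -col_permE; apply/rowP => j; rewrite !mxE tpermV.
case: j => [[|[|[|[|j]]]] hj] //=; rewrite permE /= -!val_eqE /= ?inordK //=.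
Qed.

Lemma e1_gen (g : 'M[R]_4) : gen (@gens_H3_iota R) g -> e1 R *m g = e1 R.
Proof.
elim=> [|h hh| g1 h1 _ P1 _ P2 | g1 G1 P1].
- by rewrite mulmx1.
- case: hh => [[a [ha ->]]|->]; last exact: e1_iota.
  by apply: e1_refl; case: ha => -[].
- by rewrite mulmxA P1 P2.
- have [o _] := PA_gen (gen_mono G1).
  have [ug _] := mulmx1_unit o.
  by rewrite -{1}P1 mulmxK.
Qed.
End Main.

Section Fin.
Variable R : rcfType.
Local Notation zt := (@zt R).
Local Notation vecZ := (@vecZ R).

Lemma orth_row (g : 'M[R]_4) j m : g *m g^T = 1%:M -> row j g = delta_mx 0 m ->
  forall i, g i m = (i == j)%:R.
Proof.
move=> o r i; have := congr1 (fun M : 'M[R]_4 => M i j) o; rewrite !mxE => <-.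
have gj : forall k, g j k = (delta_mx 0 m : 'rV[R]_4) 0 k by move=> k; rewrite -r mxE.
rewrite (bigD1 m) //= big1 ?addr0.
  by rewrite mxE gj !mxE !eqxx mulr1.
by move=> k hk; rewrite mxE gj !mxE (negbTE hk) mulr0.
Qed.

Lemma rowdot (g : 'M[R]_4) i j : row i g *m (row j g)^T = ((g *m g^T) i j)%:M.
Proof.
rewrite [LHS]mx11_scalar dotE !mxE; congr (_%:M); apply: eq_bigr => k _.
by rewrite !mxE.
Qed.

Lemma vec_rep (v : 'rV[R]_4) : v 0 0 = 0 -> (forall j, isA (v 0 j)) ->
  exists k u, v = vecZ k u.
Proof.
move=> h0 hA.
have [k1 [p1 e1]] := hA (@Ordinal 4 1 isT).
have [k2 [p2 e2]] := hA (@Ordinal 4 2 isT).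
have [k3 [p3 e3]] := hA (@Ordinal 4 3 isT).
exists (k1 + k2 + k3)%N, (zsc (2 ^+ (k2 + k3)) p1, zsc (2 ^+ (k1 + k3)) p2, zsc (2 ^+ (k1 + k2)) p3).
have h2 := two_neq0 R.
have hk : forall k, (2 : R) ^+ k != 0 by move=> k; rewrite expf_neq0.
apply/rowP => j; rewrite !mxE.
case: j => [[|[|[|[|j]]]] hj] //=.
- by rewrite (_ : Ordinal hj = 0) ?h0 ?mul0r //; apply/val_inj.
- rewrite (_ : Ordinal hj = @Ordinal 4 1 isT); last by apply/val_inj.
  rewrite e1 ztS intr2X !exprD.
  by field; rewrite !hk.
- rewrite (_ : Ordinal hj = @Ordinal 4 2 isT); last by apply/val_inj.
  rewrite e2 ztS intr2X !exprD.
  by field; rewrite !hk.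
- rewrite (_ : Ordinal hj = @Ordinal 4 3 isT); last by apply/val_inj.
  rewrite e3 ztS intr2X !exprD.
  by field; rewrite !hk.
Qed.

Definition e3p : Z3 int := ((0,0),(1,0),(0,0)).
Definition e3m : Z3 int := ((0,0),(-1,0),(0,0)).
Definition e4p : Z3 int := ((0,0),(0,0),(1,0)).
Definition e4m : Z3 int := ((0,0),(0,0),(-1,0)).
Definition e2p : Z3 int := ((1,0),(0,0),(0,0)).

Lemma desc2 k : forall u, u.1.1 = (0, 0) -> vecZ k u *m (vecZ k u)^T = 1%:M ->
  vecZ k u = vecZ 0 e3p \/ vecZ k u = vecZ 0 e3m \/ vecZ k u = vecZ 0 e4p \/ vecZ k u = vecZ 0 e4m.
Proof.
elim: k => [|n IH] u hu0 hn.
  have := norm_dot hn; rewrite expr0 => /unit6.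
  case=> [|[|[|[|[|]]]]] eu; rewrite eu /= in hu0 *; try by case: hu0.
  - by left.
  - by right; left.
  - by right; right; left.
  - by right; right; right.
have [w [ew hw0]] := step2 hu0 (norm_dot hn).
by rewrite ew vecZ_sc2 in hn *; apply: IH.
Qed.

Lemma vecZ_e3 : vecZ 0 e3p = delta_mx 0 (inord 2).
Proof.
apply/rowP => j; rewrite !mxE /= expr0 divr1 -val_eqE /= inordK //.
by case: j => [[|[|[|[|j]]]] hj] //=; rewrite /zt /= mul0r addr0.
Qed.

Lemma vecZ_e4 : vecZ 0 e4p = delta_mx 0 (inord 3).
Proof.
apply/rowP => j; rewrite !mxE /= expr0 divr1 -val_eqE /= inordK //.
by case: j => [[|[|[|[|j]]]] hj] //=; rewrite /zt /= mul0r addr0.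
Qed.

Lemma fix_e3 u' : u' = e3p \/ u' = e3m \/ u' = e4p \/ u' = e4m ->
  exists s, gen (@gens_H3_iota R) s /\ vecZ 0 u' *m s = vecZ 0 e3p /\ vecZ 0 e2p *m s = vecZ 0 e2p.
Proof.
have E2 := @gen_eZn R 2 erefl erefl; have E3 := @gen_eZn R 3 erefl erefl.
case=> [->|[->|[->|->]]].
- by exists 1%:M; split; [apply: gen_one | rewrite !mulmx1].
- exists (refl (vecZ 1 (eZ 2))); split => //; rewrite !refl_vecZ.
  rewrite (_ : refl3 (eZ 2) e3m = sc3 2 e3p) // (_ : refl3 (eZ 2) e2p = sc3 2 e2p) //.
  by rewrite !vecZ_sc2.
- exists (iota_mx R); split; first exact: gen_iota.
  by rewrite !vecZ_iota.
- exists (refl (vecZ 1 (eZ 3)) *m iota_mx R); split; first by apply: gen_mul => //; apply: gen_iota.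
  rewrite !mulmxA !refl_vecZ.
  rewrite (_ : refl3 (eZ 3) e4m = sc3 2 e4p) // (_ : refl3 (eZ 3) e2p = sc3 2 e2p) //.
  by rewrite !vecZ_sc2 !vecZ_iota.
Qed.

Lemma row_vec (v : 'rV[R]_4) (g : 'M[R]_4) i : row i g = v -> forall j, g i j = v 0 j.
Proof. by move=> <- j; rewrite mxE. Qed.

Lemma e1E : e1 R = delta_mx 0 0. Proof. by []. Qed.

Lemma fwd (g : 'M[R]_4) : gen (@gens_Hinf_iota R) g -> e1 R *m g = e1 R ->
  gen (@gens_H3_iota R) g.
Proof.
move=> hg he.
have [o A] := PA_gen hg.
have r0 : row 0 g = delta_mx 0 0 by rewrite rowE -e1E he.
have c0 := orth_row o r0.
have [k [u eu]] : exists k u, row 1 g = vecZ k u.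
  apply: vec_rep; first by rewrite mxE c0.
  by move=> j; rewrite mxE.
have n1 : vecZ k u *m (vecZ k u)^T = 1%:M by rewrite -eu rowdot o mxE eqxx.
have [s1 [hs1 es1]] := descent n1.
set g1 := g *m s1.
have [o1 A1] : PA g1 := PAM (PA_gen hg) (PA_gen (gen_mono hs1)).
have r10 : row 0 g1 = delta_mx 0 0 by rewrite row_mul r0 -e1E e1_gen.
have r11 : row 1 g1 = delta_mx 0 1 by rewrite row_mul eu es1.
have c10 := orth_row o1 r10; have c11 := orth_row o1 r11.
have [k2 [u2 eu2]] : exists k u, row (inord 2) g1 = vecZ k u.
  apply: vec_rep; first by rewrite mxE c10 -val_eqE /= inordK.
  by move=> j; rewrite mxE.
have u2z : u2.1.1 = (0, 0).
  have := row_vec eu2 1; rewrite c11 -val_eqE /= inordK // mxE /=.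
  move/esym/eqP; rewrite mulf_eq0 invr_eq0 expf_eq0 (negbTE (two_neq0 R)) andbF orbF.
  by move/eqP/zt0.
have n2 : vecZ k2 u2 *m (vecZ k2 u2)^T = 1%:M by rewrite -eu2 rowdot o1 mxE eqxx.
have [s2 [hs2 [es2 fs2]]] : exists s, gen (@gens_H3_iota R) s /\
    vecZ k2 u2 *m s = vecZ 0 e3p /\ vecZ 0 e2p *m s = vecZ 0 e2p.
  have := desc2 u2z n2.
  case=> [->|[->|[->|->]]]; apply: fix_e3; do ?[by left | right]; reflexivity.
set g2 := g1 *m s2.
have [o2 A2] : PA g2 := PAM (conj o1 A1) (PA_gen (gen_mono hs2)).
have r20 : row 0 g2 = delta_mx 0 0 by rewrite row_mul r10 -e1E e1_gen.
have r21 : row 1 g2 = delta_mx 0 1 by rewrite row_mul r11 -vecZ_e2 -/e2p fs2.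
have r22 : row (inord 2) g2 = delta_mx 0 (inord 2) by rewrite row_mul eu2 es2 vecZ_e3.
have c20 := orth_row o2 r20; have c21 := orth_row o2 r21; have c22 := orth_row o2 r22.
have g2E : g2 = g1 *m s2 by [].
clearbody g2.
set x := g2 (inord 3) (inord 3).
have r23 : row (inord 3) g2 = x *: delta_mx 0 (inord 3).
  apply/rowP => j; rewrite !mxE.
  case: j => [[|[|[|[|j]]]] hj] //=.
  - have -> : Ordinal hj = 0 by apply/val_inj.
    by rewrite c20 -!val_eqE /= !inordK // mulr0.
  - have -> : Ordinal hj = 1 by apply/val_inj.
    by rewrite c21 -!val_eqE /= !inordK // mulr0.
  - have -> : Ordinal hj = inord 2 by apply/val_inj; rewrite /= inordK.
    by rewrite c22 -!val_eqE /= !inordK // mulr0.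
  - have -> : Ordinal hj = inord 3 by apply/val_inj; rewrite /= inordK.
    by rewrite eqxx mulr1.
have hx : x * x = 1.
  have := rowdot g2 (inord 3) (inord 3); rewrite o2 mxE eqxx r23.
  rewrite -scalemxAl linearZ /= -scalemxAr trmx_delta mul_delta_mx scalerA => /matrixP /(_ 0 0).
  by rewrite !mxE /= !mulr1n mulr1.
have [s3 [hs3 e3]] : exists s3, gen (@gens_H3_iota R) s3 /\ g2 *m s3 = 1%:M.
  have E4 := @gen_eZn R 3 erefl erefl.
  have fix4 : forall i, (i < 3)%N -> delta_mx 0 (inord i) *m refl (vecZ 1 (eZ 3)) = delta_mx 0 (inord i) :> 'rV[R]_4.
    move=> i; case: i => [|[|[|i]]] // _.
    - have -> : inord 0 = 0 :> 'I_4 by apply/val_inj; rewrite /= inordK.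
      by rewrite -e1E e1_refl // /inV mxE /= mul0r.
    - have -> : inord 1 = 1 :> 'I_4 by apply/val_inj; rewrite /= inordK.
      rewrite -vecZ_e2 refl_vecZ (_ : refl3 (eZ 3) e2p = sc3 2 e2p) //.
      by rewrite vecZ_sc2.
    - rewrite -vecZ_e3 refl_vecZ (_ : refl3 (eZ 3) e3p = sc3 2 e3p) //.
      by rewrite vecZ_sc2.
  have ex1 : (x - 1) * (x + 1) = x * x - 1 by ring.
  have : (x - 1) * (x + 1) = 0 by rewrite ex1 hx subrr.
  move/eqP; rewrite mulf_eq0 subr_eq0 addr_eq0 => /orP [] /eqP ex.
  - exists 1%:M; split; first exact: gen_one.
    rewrite mulmx1; apply/row_matrixP => i; rewrite row1.
    case: i => [[|[|[|[|i]]]] hi] //=.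
    + by rewrite (_ : Ordinal hi = 0) //; apply/val_inj.
    + by rewrite (_ : Ordinal hi = 1) //; apply/val_inj.
    + by rewrite (_ : Ordinal hi = inord 2) //; apply/val_inj; rewrite /= inordK.
    + by rewrite (_ : Ordinal hi = inord 3) ?r23 ?ex ?scale1r //; apply/val_inj; rewrite /= inordK.
  - exists (refl (vecZ 1 (eZ 3))); split => //.
    apply/row_matrixP => i; rewrite row1 row_mul.
    case: i => [[|[|[|[|i]]]] hi] //=.
    + rewrite (_ : Ordinal hi = inord 0); last by apply/val_inj; rewrite /= inordK.
      rewrite (_ : inord 0 = 0 :> 'I_4) ?r20; last by apply/val_inj; rewrite /= inordK.
      by rewrite -(_ : inord 0 = 0 :> 'I_4) ?fix4 //; apply/val_inj; rewrite /= inordK.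
    + rewrite (_ : Ordinal hi = inord 1); last by apply/val_inj; rewrite /= inordK.
      rewrite (_ : inord 1 = 1 :> 'I_4) ?r21; last by apply/val_inj; rewrite /= inordK.
      by rewrite -(_ : inord 1 = 1 :> 'I_4) ?fix4 //; apply/val_inj; rewrite /= inordK.
    + by rewrite (_ : Ordinal hi = inord 2) ?r22 ?fix4 //; apply/val_inj; rewrite /= inordK.
    + rewrite (_ : Ordinal hi = inord 3) ?r23 ?ex; last by apply/val_inj; rewrite /= inordK.
      rewrite -vecZ_e4 -scalemxAl refl_vecZ (_ : refl3 (eZ 3) e4p = sc3 2 (sc3 (-1) e4p)) //.
      rewrite vecZ_sc2 scaleN1r; apply/rowP => j; rewrite !mxE.
      by case: j => [[|[|[|[|j]]]] hj] //=; rewrite /zt /= ?mul0r ?addr0 ?oppr0 //; ring.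
have S := gen_mul (gen_mul hs1 hs2) hs3.
have eS : g *m (s1 *m s2 *m s3) = 1%:M by rewrite !mulmxA -/g1 -g2E.
have [_ uS] := mulmx1_unit eS.
have -> : g = invmx (s1 *m s2 *m s3) by rewrite -[LHS]mulmx1 -(mulmxV uS) mulmxA eS mul1mx.
exact: gen_inv.
Qed.

Lemma bwd (g : 'M[R]_4) : gen (@gens_H3_iota R) g ->
  gen (@gens_Hinf_iota R) g /\ e1 R *m g = e1 R.
Proof. by move=> h; split; [apply: gen_mono | apply: e1_gen]. Qed.

End Fin.


Unset Implicit Arguments.
Set Strict Implicit.

Theorem mainTheorem12 (R : rcfType) (g : 'M[R]_4) :
  (gen (@gens_Hinf_iota R) g /\ e1 R *m g = e1 R) <-> gen (@gens_H3_iota R) g.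
Proof.
split; first by case=> h1 h2; exact: fwd.
exact: bwd.
Qed.
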